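(* Fix an integer $n\geq3$ and run the $n$-GHZ state generation protocol (described in the context). Suppose the protocol heralds success. If all input photons have the ideal internal state $|\psi_0\rangle$, then the output state on modes $0,\dots,2n-1$ is $|B_+\rangle=\frac1{\sqrt2}\left(|1,0\rangle^{\otimes n}+|0,1\rangle^{\otimes n}\right)$ (with all photons in internal state $|\psi_0\rangle$), where the $j$-th factor refers to modes $(2j,2j+1)$.
   Context: Photonic model: photons occupy spatial modes and carry internal states; linear optics acts on spatial modes; photon-number-resolving (PNR) detection reveals only photon number per spatial mode. Hadamard beamsplitter $H$ on ordered pair $(p,q)$: $a_p^\dagger\mapsto(a_p^\dagger+a_q^\dagger)/\sqrt2$, $a_q^\dagger\mapsto(a_p^\dagger-a_q^\dagger)/\sqrt2$. The $n$-GHZ state analyzer on $2n$ modes labeled $0,\dots,2n-1$: apply $H$ to each ordered pair in $\{(1,2),(3,4),\dots,(2n-3,2n-2),(2n-1,0)\}$, PNR-measure all modes getting $(m_0,\dots,m_{2n-1})$, succeed iff $m_{2i+1}+m_{2i+2}=1$ for all $0\le i<n$ ($m_{2n}=m_0$); it reports the value $(-1)^{s_{\mathrm{odd}}}$ for $X_0\cdots X_{n-1}$, where $s_{\mathrm{odd}}$ is the number of photons detected in its odd-indexed modes. The $n$-GHZ generation protocol on $4n$ modes $0,\dots,4n-1$: (1) input $|1\rangle^{\otimes 2n}\otimes|0\rangle^{\otimes 2n}$; (2) apply $H$ on each pair $(2i,2i+1)$, $0\le i<n$; (3) apply $H$ on each pair $(i,2n+i)$, $0\le i<2n$; (4) apply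 the $n$-GHZ state analyzer to modes $2n,\dots,4n-1$ (mode $2n+j$ playing the role of analyzer mode $j$), proceeding iff it heralds success; (5) if the analyzer reports $X\cdots X=-1$, apply a phase $-1$ to mode $1$. The output consists of modes $0,\dots,2n-1$. *)

(* Defs.v *)
From HB Require Import structures.
From mathcomp Require Import all_boot all_order all_algebra all_field.
From mathcomp Require Import mpoly.
Unset Printing Implicit Defensive.
Import Order.TTheory GRing.Theory Num.Theory.
Local Open Scope ring_scope.

(* Second-quantized representation: a (finite-photon) state on N spatial modes,
   all photons in the same internal state psi0, is  P(a_0^+,...,a_{N-1}^+)|vac>
   for a polynomial P in N commuting variables; we identify the state with P.
   (Fock state |m> = prod_i (a_i^+)^{m_i}/sqrt(m_i!) |vac>.) *)
Definition state (N : nat) := {mpoly algC[N]}.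

(* creation operator of mode i (0 if i is out of range) *)
Definition var (N i : nat) : state N :=
  if insub i is Some j then 'X_j else 0.

Definition s2 : algC := sqrtC 2%:R.

(* Hadamard beamsplitter on ordered pair (p,q):
   a_p^+ |-> (a_p^+ + a_q^+)/sqrt2, a_q^+ |-> (a_p^+ - a_q^+)/sqrt2.
   On P(a^+)|vac> it acts by substituting these images into P. *)
Definition hbs_sub (N p q : nat) : N.-tuple (state N) :=
  [tuple (if val i == p then s2^-1 *: (var N p + var N q)
          else if val i == q then s2^-1 *: (var N p - var N q)
          else 'X_i) | i < N].

Definition hbs (N p q : nat) (P : state N) : state N := P \mPo hbs_sub N p q.

Definition apply_hbs (N : nat) (l : seq (nat * nat)) (P : state N) : state N :=
  foldl (fun P pq => hbs N pq.1 pq.2 P) P l.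

Definition phase_flip (N r : nat) (P : state N) : state N :=
  P \mPo [tuple (if val i == r then - var N r else 'X_i) | i < N].

Definition NN (n : nat) : nat := (4 * n)%N.

Definition input_state (n : nat) : state (NN n) :=
  \prod_(i < 2 * n) var (NN n) i.

Definition step2_pairs (n : nat) : seq (nat * nat) :=
  mkseq (fun i => (2 * i, 2 * i + 1)%N) n.
Definition step3_pairs (n : nat) : seq (nat * nat) :=
  mkseq (fun i => (i, 2 * n + i)%N) (2 * n).
(* analyzer pairs (1,2),(3,4),...,(2n-3,2n-2),(2n-1,0), with analyzer mode j
   being global mode 2n+j *)
Definition analyzer_pairs (n : nat) : seq (nat * nat) :=
  mkseq (fun i => (2 * n + (2 * i + 1), 2 * n + (2 * i + 2) %% (2 * n))%N) n.

Definition pre_measurement (n : nat) : state (NN n) :=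
  apply_hbs (NN n) (analyzer_pairs n)
    (apply_hbs (NN n) (step3_pairs n) (apply_hbs (NN n) (step2_pairs n) (input_state n))).

(* PNR outcome k: k j = photon number in analyzer mode j (global mode 2n+j),
   for j < 2n.  The (unnormalized) post-measurement state of modes 0..2n-1
   (up to the positive constant sqrt(prod_j k_j!)) is obtained by keeping the
   monomials whose exponents on modes 2n..4n-1 match k and deleting those
   variables. *)
Definition measure_high (n : nat) (k : nat -> nat) (P : state (NN n)) : state (NN n) :=
  \sum_(m <- msupp P | [forall j : 'I_(NN n),
                          (2 * n <= j)%N ==> (m j == k (j - 2 * n)%N)])
     P@_m *: 'X_[[multinom (if (i < 2 * n)%N then m i else 0%N) | i < NN n]].

Definition analyzer_success (n : nat) (k : nat -> nat) : Prop :=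
  forall i, (i < n)%N -> (k (2 * i + 1) + k ((2 * i + 2) %% (2 * n)))%N = 1%N.

Definition s_odd (n : nat) (k : nat -> nat) : nat :=
  (\sum_(j < 2 * n | odd j) k j)%N.

Definition protocol_output (n : nat) (k : nat -> nat) : state (NN n) :=
  let Q := measure_high n k (pre_measurement n) in
  if odd (s_odd n k) then phase_flip (NN n) 1 Q else Q.

Definition B_plus (n : nat) : state (NN n) :=
  s2^-1 *: (\prod_(j < n) var (NN n) (2 * j) + \prod_(j < n) var (NN n) (2 * j + 1)).

(* Main.v *)
Require Import Defs.
From HB Require Import structures.
From mathcomp Require Import all_boot all_order all_algebra all_field.
From mathcomp Require Import mpoly.
From mathcomp Require Import zify ring.
Import GRing.Theory Num.Theory.
Local Open Scope ring_scope.

Section Hbs.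
Variable N : nat.
Implicit Types (P Q : state N).

Lemma apply_hbs_cons l x P : apply_hbs N (x :: l) P = apply_hbs N l (hbs N x.1 x.2 P).
Proof. by []. Qed.

Lemma apply_hbs_rcons l x P :
  apply_hbs N (rcons l x) P = hbs N x.1 x.2 (apply_hbs N l P).
Proof. by rewrite /apply_hbs foldl_rcons. Qed.

Lemma apply_hbsD l P Q : apply_hbs N l (P + Q) = apply_hbs N l P + apply_hbs N l Q.
Proof. elim: l P Q => [//|x l IH] P Q; by rewrite !apply_hbs_cons /hbs rmorphD IH. Qed.

Lemma apply_hbsM l P Q : apply_hbs N l (P * Q) = apply_hbs N l P * apply_hbs N l Q.
Proof. elim: l P Q => [//|x l IH] P Q; by rewrite !apply_hbs_cons /hbs rmorphM IH. Qed.

Lemma apply_hbsZ l c P : apply_hbs N l (c *: P) = c *: apply_hbs N l P.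
Proof. elim: l P => [//|x l IH] P; by rewrite !apply_hbs_cons /hbs linearZ IH. Qed.

Lemma apply_hbsN l P : apply_hbs N l (- P) = - apply_hbs N l P.
Proof. elim: l P => [//|x l IH] P; by rewrite !apply_hbs_cons /hbs rmorphN IH. Qed.

Lemma apply_hbsB l P Q : apply_hbs N l (P - Q) = apply_hbs N l P - apply_hbs N l Q.
Proof. by rewrite apply_hbsD apply_hbsN. Qed.

Lemma apply_hbs1 l : apply_hbs N l 1 = 1.
Proof. elim: l => [//|x l IH]; by rewrite !apply_hbs_cons /hbs rmorph1 IH. Qed.

Lemma apply_hbs_prod l (I : Type) (r : seq I) (F : I -> state N) :
  apply_hbs N l (\prod_(i <- r) F i) = \prod_(i <- r) apply_hbs N l (F i).
Proof. exact: (big_morph _ (apply_hbsM l) (apply_hbs1 l)). Qed.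

Lemma varE j (h : (j < N)%N) : var N j = 'X_(Ordinal h).
Proof. by rewrite /var insubT. Qed.

Lemma var_out j : (N <= j)%N -> var N j = 0.
Proof. by move=> h; rewrite /var insubF // ltnNge h. Qed.

Lemma hbs_var p q j : hbs N p q (var N j) =
  if (j < N)%N then
    (if j == p then s2^-1 *: (var N p + var N q)
     else if j == q then s2^-1 *: (var N p - var N q) else var N j)
  else 0.
Proof.
case: (ltnP j N) => hj.
  rewrite [in LHS](@varE j hj) /hbs comp_mpolyXU -tnth_nth tnth_mktuple /=.
  by case: ifP => // _; case: ifP => // _; rewrite (@varE j hj).
by rewrite var_out // /hbs rmorph0.
Qed.

Lemma hbs_var_other p q j : j != p -> j != q -> hbs N p q (var N j) = var N j.
Proof.
move=> /negbTE hp /negbTE hq; rewrite hbs_var hp hq.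
by case: ltnP => // hj; rewrite var_out.
Qed.

Lemma hbs_var_p p q : (p < N)%N -> hbs N p q (var N p) = s2^-1 *: (var N p + var N q).
Proof. by move=> hp; rewrite hbs_var hp eqxx. Qed.

Lemma hbs_var_q p q : (q < N)%N -> p != q ->
  hbs N p q (var N q) = s2^-1 *: (var N p - var N q).
Proof. by move=> hq hpq; rewrite hbs_var hq eq_sym (negbTE hpq) eqxx. Qed.

Section Mk.
Variables (P Q : nat -> nat).
Local Notation L m := (mkseq (fun i => (P i, Q i)) m).

Lemma apply_other m j : (forall i, (i < m)%N -> P i != j /\ Q i != j) ->
  apply_hbs N (L m) (var N j) = var N j.
Proof.
elim: m => [//|m IH] H.
rewrite mkseqS apply_hbs_rcons IH /=; last by move=> i hi; apply: H; lia.
have [h1 h2] := H m (ltnSn m).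
by apply: hbs_var_other; rewrite eq_sym.
Qed.

Lemma apply_PQ m :
  (forall i, (i < m)%N -> (P i < N)%N /\ (Q i < N)%N) ->
  (forall i i', (i < m)%N -> (i' < m)%N -> P i = P i' -> i = i') ->
  (forall i i', (i < m)%N -> (i' < m)%N -> Q i = Q i' -> i = i') ->
  (forall i i', (i < m)%N -> (i' < m)%N -> P i != Q i') ->
  forall i, (i < m)%N ->
    apply_hbs N (L m) (var N (P i)) = s2^-1 *: (var N (P i) + var N (Q i)) /\
    apply_hbs N (L m) (var N (Q i)) = s2^-1 *: (var N (P i) - var N (Q i)).
Proof.
elim: m => [//|m IH] Hb HP HQ HPQ i hi.
rewrite mkseqS !apply_hbs_rcons /=.
have [hPm hQm] := Hb m (ltnSn m).
case: (ltnP i m) => him.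
  have [-> ->] := IH (fun i h => Hb i (ltnW h))
     (fun i i' h h' => HP i i' (ltnW h) (ltnW h'))
     (fun i i' h h' => HQ i i' (ltnW h) (ltnW h'))
     (fun i i' h h' => HPQ i i' (ltnW h) (ltnW h')) i him.
  have n1 : P i != P m by apply/eqP => /HP; lia.
  have n2 : P i != Q m by apply: HPQ; lia.
  have n3 : Q i != P m by rewrite eq_sym; apply: HPQ; lia.
  have n4 : Q i != Q m by apply/eqP => /HQ; lia.
  by rewrite /hbs !linearZ /= rmorphD rmorphB /= -!/(hbs _ _ _ _)
     !hbs_var_other.
have -> : i = m by lia.
rewrite !apply_other; first split.
- exact: hbs_var_p.
- by apply: hbs_var_q => //; apply: HPQ.
- move=> i' hi'; split; first [by apply/eqP => /HP; lia | by apply/eqP => /HQ; lia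
   | by apply: HPQ; lia | by rewrite eq_sym; apply: HPQ; lia].
- move=> i' hi'; split; first [by apply/eqP => /HP; lia | by apply/eqP => /HQ; lia
   | by apply: HPQ; lia | by rewrite eq_sym; apply: HPQ; lia].
Qed.
End Mk.
End Hbs.

Definition p1 (i : nat) : nat := (2*i+1)%N.
Definition p2 (n i : nat) : nat := ((2*i+2) %% (2*n))%N.
Definition prevn (n i : nat) : nat := if i == 0%N then n.-1 else i.-1.
Definition cv n j := var (NN n) (2*n + j).
Definition xv n i := var (NN n) (2*i).
Definition yv n i := var (NN n) (2*i+1).
Definition vv n i := s2^-1 *: (cv n (p1 i) + cv n (p2 n i)).
Definition uu n i := s2^-1 *: (cv n (p1 (prevn n i)) - cv n (p2 n (prevn n i))).
Definition Aall n P := apply_hbs (NN n) (analyzer_pairs n)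
   (apply_hbs (NN n) (step3_pairs n) (apply_hbs (NN n) (step2_pairs n) P)).
Definition Fp n i :=
  (s2^-1 *: (s2^-1 *: (xv n i + uu n i) + s2^-1 *: (yv n i + vv n i))) *
  (s2^-1 *: (s2^-1 *: (xv n i + uu n i) - s2^-1 *: (yv n i + vv n i))).

Lemma p2E n i : (i < n)%N -> p2 n i = if i.+1 == n then 0%N else (2*i+2)%N.
Proof.
move=> hi; rewrite /p2; case: eqP => [<-|ne].
  have ->: (2*i+2 = 2*i.+1)%N by lia.
  by rewrite modnn.
rewrite modn_small //; lia.
Qed.

Lemma prevn_lt n i : (i < n)%N -> (prevn n i < n)%N.
Proof. rewrite /prevn; case: eqP; lia. Qed.

Lemma p2_prevn n i : (i < n)%N -> p2 n (prevn n i) = (2*i)%N.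
Proof.
move=> hi; rewrite p2E ?prevn_lt // /prevn.
case: (i =P 0%N) => [->|ne]; case: eqP; lia.
Qed.

Lemma p2_lt n i : (i < n)%N -> (p2 n i < 2 * n)%N.
Proof. move=> hi; rewrite p2E //; case: eqP; lia. Qed.

Arguments p2E {n i}.
Arguments prevn_lt {n i}.
Arguments p2_prevn {n i}.
Arguments p2_lt {n i}.

Section Steps.
Variables (n : nat).
Local Notation N := (NN n).

Lemma step2_E i : (i < n)%N ->
  apply_hbs N (step2_pairs n) (var N (2*i)) = s2^-1 *: (var N (2*i) + var N (2*i+1)) /\
  apply_hbs N (step2_pairs n) (var N (2*i+1)) = s2^-1 *: (var N (2*i) - var N (2*i+1)).
Proof.
move=> hi.
have [] := @apply_PQ N (fun i => 2*i)%N (fun i => 2*i+1)%N n _ _ _ _ i hi.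
- move=> i' h'; rewrite /NN; lia.
- move=> ? ? ? ?; lia.
- move=> ? ? ? ?; lia.
- move=> ? ? ? ?; apply/eqP; lia.
- by move=> -> ->.
Qed.

Lemma step3_E i : (i < 2 * n)%N ->
  apply_hbs N (step3_pairs n) (var N i) = s2^-1 *: (var N i + var N (2*n+i)).
Proof.
move=> hi.
have [] := @apply_PQ N (fun i => i)%N (fun i => 2*n+i)%N (2*n) _ _ _ _ i hi.
- move=> i' h'; rewrite /NN; lia.
- move=> ? ? ? ?; lia.
- move=> ? ? ? ?; lia.
- move=> ? ? ? ?; apply/eqP; lia.
- by move=> -> _.
Qed.

Lemma an_low j : (j < 2 * n)%N ->
  apply_hbs N (analyzer_pairs n) (var N j) = var N j.
Proof.
move=> hj; apply: apply_other => i hi; split; apply/eqP; lia.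
Qed.

Lemma an_hyps :
  [/\ (forall i, (i < n)%N -> (2*n + (2*i+1) < N)%N /\ (2*n + (2*i+2) %% (2*n) < N)%N),
      (forall i i', (i < n)%N -> (i' < n)%N -> (2*n + (2*i+1))%N = (2*n + (2*i'+1))%N -> i = i'),
      (forall i i', (i < n)%N -> (i' < n)%N ->
          (2*n + (2*i+2) %% (2*n))%N = (2*n + (2*i'+2) %% (2*n))%N -> i = i') &
      (forall i i', (i < n)%N -> (i' < n)%N ->
          (2*n + (2*i+1))%N != (2*n + (2*i'+2) %% (2*n))%N)].
Proof.
split.
- move=> i hi; have := p2_lt hi; rewrite /p2 /NN; lia.
- move=> ? ? ? ?; lia.
- move=> i i' hi hi'; have := p2E hi; have := p2E hi'; rewrite /p2.
  move=> -> ->; case: eqP; case: eqP; lia.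
- move=> i i' hi hi'; have := p2E hi'; rewrite /p2 => ->; apply/eqP.
  case: eqP; lia.
Qed.

Lemma an_odd i : (i < n)%N ->
  apply_hbs N (analyzer_pairs n) (var N (2*n + (2*i+1))) = vv n i.
Proof.
move=> hi; have [h1 h2 h3 h4] := an_hyps.
by have [-> _] := @apply_PQ N _ _ n h1 h2 h3 h4 i hi.
Qed.

Lemma an_even i : (i < n)%N ->
  apply_hbs N (analyzer_pairs n) (var N (2*n + 2*i)) = uu n i.
Proof.
move=> hi; have [h1 h2 h3 h4] := an_hyps.
have [_ E] := @apply_PQ N _ _ n h1 h2 h3 h4 (prevn n i) (prevn_lt hi).
move: E; rewrite /uu /cv /=; rewrite -/(p2 n (prevn n i)) p2_prevn // => ->.
Qed.

Lemma A_E i : (i < n)%N ->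
  Aall n (var N (2*i)) = s2^-1 *: (s2^-1 *: (xv n i + uu n i) + s2^-1 *: (yv n i + vv n i)) /\
  Aall n (var N (2*i+1)) = s2^-1 *: (s2^-1 *: (xv n i + uu n i) - s2^-1 *: (yv n i + vv n i)).
Proof.
move=> hi; have [E1 E2] := step2_E i hi; rewrite /Aall E1 E2.
rewrite !(apply_hbsZ, apply_hbsD, apply_hbsB, apply_hbsN) !step3_E; try lia.
rewrite !(apply_hbsZ, apply_hbsD, apply_hbsB, apply_hbsN).
rewrite (an_low (2*i)); last lia.
rewrite (an_low (2*i+1)); last lia.
by rewrite (an_odd i hi) (an_even i hi).
Qed.
End Steps.

Lemma prod_pairs (R : comNzRingType) (f : nat -> R) n :
  \prod_(j < 2*n) f j = \prod_(i < n) (f (2*i)%N * f (2*i+1)%N).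
Proof.
elim: n => [|n IH]; first by rewrite !big_ord0.
have -> : (2 * n.+1 = (2*n).+1.+1)%N by lia.
rewrite !big_ord_recr /= IH mulrA; congr (_ * _ * f _); lia.
Qed.

Lemma pre_E n : pre_measurement n = \prod_(i < n) Fp n i.
Proof.
rewrite /pre_measurement /input_state !apply_hbs_prod.
rewrite (@prod_pairs _ (fun j => Aall n (var (NN n) j))).
by apply: eq_bigr => i _; have [-> ->] := @A_E n i (ltn_ord i).
Qed.

Section Homog.
Variables (N K : nat) (g : 'X_{1..N} -> 'X_{1..K}).
Hypothesis gD : forall m1 m2, g (m1 + m2)%MM = (g m1 + g m2)%MM.
Hypothesis g0 : g 0%MM = 0%MM.

Definition hmg (D : 'X_{1..K}) (p : {mpoly algC[N]}) :=
  forall m, m \in msupp p -> g m = D.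

Lemma hmg0 D : hmg D 0.
Proof. by move=> m; rewrite msupp0. Qed.

Lemma hmgD D p q : hmg D p -> hmg D q -> hmg D (p + q).
Proof. by move=> hp hq m /msuppD_le; rewrite mem_cat => /orP [] ?; auto. Qed.

Lemma hmgN D p : hmg D p -> hmg D (- p).
Proof. by move=> hp m; rewrite (perm_mem (msuppN p)); apply: hp. Qed.

Lemma hmgB D p q : hmg D p -> hmg D q -> hmg D (p - q).
Proof. by move=> hp hq; apply: hmgD => //; apply: hmgN. Qed.

Lemma hmgZ D c p : hmg D p -> hmg D (c *: p).
Proof. by move=> hp m /msuppZ_le; apply: hp. Qed.

Lemma hmgM D1 D2 p q : hmg D1 p -> hmg D2 q -> hmg (D1 + D2)%MM (p * q).
Proof.
move=> hp hq m /msuppM_le /allpairsP [[m1 m2] /= [h1 h2 ->]].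
by rewrite gD (hp _ h1) (hq _ h2).
Qed.

Lemma hmgC c : hmg 0%MM c%:MP.
Proof.
move=> m; rewrite msuppC; case: eqP => // _.
by rewrite mem_seq1 => /eqP ->.
Qed.

Lemma hmgCM D c p : hmg D p -> hmg D (c%:MP * p).
Proof. by rewrite mul_mpolyC; apply: hmgZ. Qed.

Lemma hmg1 : hmg 0%MM 1.
Proof. by rewrite -mpolyC1; apply: hmgC. Qed.

Lemma hmgX (i : 'I_N) : hmg (g U_(i)) 'X_i.
Proof. by move=> m; rewrite msuppX mem_seq1 => /eqP ->. Qed.

Lemma hmg_prod (I : Type) (r : seq I) (F : I -> {mpoly algC[N]}) (Dg : I -> 'X_{1..K}) :
  (forall i, hmg (Dg i) (F i)) ->
  hmg (\sum_(i <- r) Dg i)%MM (\prod_(i <- r) F i).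
Proof.
move=> H; elim: r => [|x r IH]; rewrite ?big_nil ?big_cons; first exact: hmg1.
exact: hmgM.
Qed.

Lemma hmg_sum D (I : Type) (r : seq I) (F : I -> {mpoly algC[N]}) :
  (forall i, hmg D (F i)) -> hmg D (\sum_(i <- r) F i).
Proof.
move=> H; elim: r => [|x r IH]; rewrite ?big_nil ?big_cons; first exact: hmg0.
exact: hmgD.
Qed.
End Homog.
Arguments hmg {N K} g D p.

Lemma big_supp_ext (T : eqType) (V : zmodType) (s1 s2 : seq T) (F : T -> V) :
  uniq s1 -> uniq s2 -> {subset s1 <= s2} ->
  (forall x, x \in s2 -> x \notin s1 -> F x = 0) ->
  \sum_(x <- s2) F x = \sum_(x <- s1) F x.
Proof.
move=> u1 u2 sub H.
have P1 : perm_eq ([seq x <- s2 | mem s1 x] ++ [seq x <- s2 | predC (mem s1) x]) s2.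
  by apply/permPl/perm_filterC.
rewrite -(perm_big _ P1) big_cat /=.
rewrite [X in _ + X]big1_seq ?addr0; last first.
  by move=> x /andP [_]; rewrite mem_filter => /andP [/= h1 h2]; apply: H.
apply: perm_big; apply: uniq_perm; first exact: filter_uniq.
  by [].
by move=> x; rewrite mem_filter /=; apply/andP/idP => [[]//|h]; split => //; apply: sub.
Qed.

Definition condk n (k : nat -> nat) (m : 'X_{1..NN n}) :=
  [forall j : 'I_(NN n), (2 * n <= j)%N ==> (m j == k (j - 2 * n)%N)].
Definition lowm n (m : 'X_{1..NN n}) : 'X_{1..NN n} :=
  [multinom (if (i < 2 * n)%N then m i else 0%N) | i < NN n].

Section MH.
Variables (n : nat) (k : nat -> nat).
Local Notation L := (measure_high n k).

Lemma mh_ext P s : uniq s -> {subset msupp P <= s} ->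
  L P = \sum_(m <- s) (if condk n k m then P@_m *: 'X_[lowm n m] else 0).
Proof.
move=> us sub; rewrite /measure_high big_mkcond; symmetry.
apply: big_supp_ext => //; rewrite ?msupp_uniq //.
by move=> x _ /memN_msupp_eq0 ->; rewrite scale0r; case: ifP.
Qed.

Lemma mhD P Q : L (P + Q) = L P + L Q.
Proof.
set s := undup (msupp P ++ msupp Q).
have us : uniq s by apply: undup_uniq.
rewrite !(@mh_ext _ s) //; last first.
all: try (by move=> m /msuppD_le; rewrite mem_undup).
all: try (by move=> m h; rewrite mem_undup mem_cat h ?orbT).
rewrite -big_split; apply: eq_bigr => m _ /=; rewrite mcoeffD scalerDl.
by case: ifP; rewrite ?addr0.
Qed.

Lemma mhZ c P : L (c *: P) = c *: L P.
Proof.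
rewrite !(@mh_ext _ (msupp P)) ?msupp_uniq //; last by move=> m /msuppZ_le.
rewrite scaler_sumr; apply: eq_bigr => m _.
by case: ifP => _; rewrite ?scaler0 // mcoeffZ scalerA.
Qed.

Lemma mh0 : L 0 = 0.
Proof. by have := mhZ 0 0; rewrite !scale0r. Qed.

Lemma mhN P : L (- P) = - L P.
Proof. by rewrite -scaleN1r mhZ scaleN1r. Qed.

Lemma mh_sum (I : Type) (r : seq I) (F : I -> state (NN n)) :
  L (\sum_(i <- r) F i) = \sum_(i <- r) L (F i).
Proof. exact: (big_morph _ mhD mh0). Qed.

Lemma mhCM c P : L (c%:MP * P) = c *: L P.
Proof. by rewrite mul_mpolyC mhZ. Qed.

Lemma mhX m : L 'X_[m] = if condk n k m then 'X_[lowm n m] else 0.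
Proof. by rewrite /measure_high msuppX big_mkcond big_seq1 mcoeffX eqxx scale1r. Qed.

Lemma mh_homog (K : nat) (g : 'X_{1..NN n} -> 'X_{1..K}) (Gk D : 'X_{1..K}) P :
  (forall m, condk n k m -> g m = Gk) -> hmg g D P -> D != Gk -> L P = 0.
Proof.
move=> hG hP hD; rewrite /measure_high big1_seq // => m /andP [hc hm].
by move: (hG m hc); rewrite (hP m hm) => E; rewrite E eqxx in hD.
Qed.
End MH.

Definition mget N (m : 'X_{1..N}) (j : nat) : nat :=
  if insub j is Some o then m o else 0%N.
Arguments mget {N} m j.

Lemma mgetD N (m1 m2 : 'X_{1..N}) j : mget (m1 + m2)%MM j = (mget m1 j + mget m2 j)%N.
Proof. by rewrite /mget; case: insub => // o; rewrite mnmDE. Qed.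

Lemma mget0 N j : mget (0%MM : 'X_{1..N}) j = 0%N.
Proof. by rewrite /mget; case: insub => // o; rewrite mnm0E. Qed.

Lemma mgetU N (o : 'I_N) j : mget (U_(o))%MM j = ((o : nat) == j) :> nat.
Proof.
rewrite /mget; case: insubP => [o' hj <-|hj]; first by rewrite mnm1E -val_eqE.
case: eqP => // E; move: hj; rewrite -E ltn_ord //.
Qed.

Lemma mget_ord N (m : 'X_{1..N}) (o : 'I_N) : mget m o = m o.
Proof. by rewrite /mget valK. Qed.

Definition pairdeg n (m : 'X_{1..NN n}) : 'X_{1..n} :=
  [multinom (mget m (2*n + p1 i) + mget m (2*n + p2 n i))%N | i < n].
Definition highpart n (m : 'X_{1..NN n}) : 'X_{1..2*n} :=
  [multinom mget m (2*n + j) | j < 2*n].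

Lemma pairdegD n m1 m2 : pairdeg n (m1 + m2)%MM = (pairdeg n m1 + pairdeg n m2)%MM.
Proof. by apply/mnmP => i; rewrite mnmDE !mnmE !mgetD; lia. Qed.
Lemma pairdeg0 n : pairdeg n 0%MM = 0%MM.
Proof. by apply/mnmP => i; rewrite mnm0E !mnmE !mget0. Qed.
Lemma highpartD n m1 m2 : highpart n (m1 + m2)%MM = (highpart n m1 + highpart n m2)%MM.
Proof. by apply/mnmP => i; rewrite mnmDE !mnmE !mgetD. Qed.
Lemma highpart0 n : highpart n 0%MM = 0%MM.
Proof. by apply/mnmP => i; rewrite mnm0E !mnmE !mget0. Qed.

Lemma p_facts n i i0 : (i < n)%N -> (i0 < n)%N ->
  [/\ (p1 i0 == p1 i) = (i0 == i), (p1 i0 == p2 n i) = false,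
      (p2 n i0 == p1 i) = false & (p2 n i0 == p2 n i) = (i0 == i)].
Proof.
move=> hi hi0; rewrite /p1 (p2E hi) (p2E hi0).
split; [by apply/eqP/eqP; lia | | |];
  (case: (i.+1 =P n); case: (i0.+1 =P n)) => * //; try (apply/eqP; lia);
  apply/eqP/eqP; lia.
Qed.

Lemma condk_mget n k m p : condk n k m -> (p < 2 * n)%N -> mget m (2*n + p) = k p.
Proof.
move=> hc hp; have h : (2*n + p < NN n)%N by rewrite /NN; lia.
rewrite /mget insubT /=; move/forallP: hc => /(_ (Ordinal h)) /=.
by rewrite leq_addr /= => /eqP ->; rewrite addKn.
Qed.

Arguments condk_mget {n k m p}.

Definition ones n : 'X_{1..n} := [multinom 1%N | i < n].
Definition kmn n (k : nat -> nat) : 'X_{1..2*n} := [multinom k j | j < 2*n].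

Lemma cond_pairdeg n k m : analyzer_success n k -> condk n k m -> pairdeg n m = ones n.
Proof.
move=> hs hc; apply/mnmP => i; rewrite !mnmE (condk_mget hc); last by have := ltn_ord i; rewrite /p1; lia.
rewrite (condk_mget hc); last exact: p2_lt.
by apply: hs.
Qed.

Lemma cond_highpart n k m : condk n k m -> highpart n m = kmn n k.
Proof. by move=> hc; apply/mnmP => i; rewrite !mnmE (condk_mget hc). Qed.

Lemma hmg_var N K (g : 'X_{1..N} -> 'X_{1..K}) j (hj : (j < N)%N) :
  hmg g (g (U_(Ordinal hj))%MM) (var N j).
Proof. by rewrite (@varE N j hj); apply: hmgX. Qed.

Arguments hmg_var {N K} g {j} hj.

Lemma pairdeg_low n (o : 'I_(NN n)) : (o < 2 * n)%N -> pairdeg n (U_(o))%MM = 0%MM.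
Proof. move=> h; apply/mnmP => i; rewrite mnm0E mnmE !mgetU. do 2 case: eqP; lia. Qed.

Lemma highpart_low n (o : 'I_(NN n)) : (o < 2 * n)%N -> highpart n (U_(o))%MM = 0%MM.
Proof. by move=> h; apply/mnmP => i; rewrite mnm0E mnmE !mgetU; case: eqP; lia. Qed.

Lemma hmg_low n K (g : 'X_{1..NN n} -> 'X_{1..K}) (gl : forall o : 'I_(NN n), (o < 2 * n)%N -> g (U_(o))%MM = 0%MM) j :
  (j < 2 * n)%N -> hmg g 0%MM (var (NN n) j).
Proof.
move=> hj; have hj' : (j < NN n)%N by rewrite /NN; lia.
by have := hmg_var g hj'; rewrite gl.
Qed.

Lemma hmg_cv1 n (o : 'I_n) : hmg (pairdeg n) (U_(o))%MM (cv n (p1 o)).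
Proof.
have h : (2*n + p1 o < NN n)%N by rewrite /NN /p1; have := ltn_ord o; lia.
have := hmg_var (pairdeg n) h; rewrite /cv; congr hmg.
apply/mnmP => i; rewrite !mnmE !mgetU /=.
have [f1 f2 f3 f4] := @p_facts n i o (ltn_ord i) (ltn_ord o).
by rewrite !eqn_add2l f1 f2 addn0.
Qed.

Lemma hmg_cv2 n (o : 'I_n) : hmg (pairdeg n) (U_(o))%MM (cv n (p2 n o)).
Proof.
have h : (2*n + p2 n o < NN n)%N by rewrite /NN; have := p2_lt (ltn_ord o); lia.
have := hmg_var (pairdeg n) h; rewrite /cv; congr hmg.
apply/mnmP => i; rewrite !mnmE !mgetU /=.
have [f1 f2 f3 f4] := @p_facts n i o (ltn_ord i) (ltn_ord o).
by rewrite !eqn_add2l f3 f4.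
Qed.

Definition prevo n (i : 'I_n) : 'I_n := Ordinal (prevn_lt (ltn_ord i)).
Arguments prevo {n}.
Definition nextn n j := if j.+1 == n then 0%N else j.+1.
Lemma nextn_lt n j : (j < n)%N -> (nextn n j < n)%N.
Proof. rewrite /nextn; case: eqP; lia. Qed.
Arguments nextn_lt {n j}.
Definition nexto n (j : 'I_n) : 'I_n := Ordinal (nextn_lt (ltn_ord j)).

Arguments nexto {n}.

Lemma prev_next n i j : (i < n)%N -> (j < n)%N -> (prevn n i == j) = (i == nextn n j).
Proof. move=> hi hj; rewrite /prevn /nextn; apply/eqP/eqP; case: eqP; case: eqP; lia. Qed.

Lemma prevo_eq n (i j : 'I_n) : (prevo i == j) = (i == nexto j).
Proof. by have := @prev_next n i j (ltn_ord i) (ltn_ord j); rewrite -!val_eqE. Qed.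

Definition a2 : algC := s2^-1.

Definition Tt n (i : 'I_n) (j : 'I_5) : state (NN n) :=
  match val j with
  | 0 => (a2^+4)%:MP * (xv n i * xv n i - yv n i * yv n i)
  | 1 => (2 * a2^+4)%:MP * (xv n i * uu n i)
  | 2 => (- (2 * a2^+4))%:MP * (yv n i * vv n i)
  | 3 => (a2^+4)%:MP * (uu n i * uu n i)
  | _ => (- a2^+4)%:MP * (vv n i * vv n i)
  end.

Definition dT n (i : 'I_n) (j : 'I_5) : 'X_{1..n} :=
  match val j with
  | 0 => 0%MM
  | 1 => (U_(prevo i))%MM
  | 2 => (U_(i))%MM
  | 3 => (U_(prevo i) + U_(prevo i))%MM
  | _ => (U_(i) + U_(i))%MM
  end.

Lemma F_T n (i : 'I_n) : Fp n i = \sum_(j < 5) Tt n i j.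
Proof.
rewrite !big_ord_recr big_ord0 /= /Fp /Tt /=.
rewrite -!mul_mpolyC !rmorphM !rmorphN !rmorphXn /= !mpolyC_nat -/a2.
ring.
Qed.

Section PD.
Variable n : nat.
Local Notation pd := (pairdeg n).

Lemma pdM D1 D2 D p q : hmg pd D1 p -> hmg pd D2 q -> D = (D1 + D2)%MM -> hmg pd D (p * q).
Proof. by move=> h1 h2 ->; apply: hmgM => //; apply: pairdegD. Qed.

Arguments pdM {D1 D2 D p q}.
Lemma pdCM D c p : hmg pd D p -> hmg pd D (c%:MP * p).
Proof. by move=> h; apply: hmgCM. Qed.

Lemma hmg_xv (i : 'I_n) : hmg pd 0%MM (xv n i).
Proof. apply: hmg_low; first exact: pairdeg_low. have := ltn_ord i; lia. Qed.
Lemma hmg_yv (i : 'I_n) : hmg pd 0%MM (yv n i).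
Proof. apply: hmg_low; first exact: pairdeg_low. have := ltn_ord i; lia. Qed.
Lemma hmg_uu (i : 'I_n) : hmg pd (U_(prevo i))%MM (uu n i).
Proof. apply: hmgZ; apply: hmgB; [exact: (hmg_cv1 n (prevo i)) | exact: (hmg_cv2 n (prevo i))]. Qed.
Lemma hmg_vv (i : 'I_n) : hmg pd (U_(i))%MM (vv n i).
Proof. apply: hmgZ; apply: hmgD; [exact: (hmg_cv1 n i) | exact: (hmg_cv2 n i)]. Qed.

Lemma hmg_T (i : 'I_n) (j : 'I_5) : hmg pd (dT n i j) (Tt n i j).
Proof.
have hx := hmg_xv i; have hy := hmg_yv i; have hu := hmg_uu i; have hv := hmg_vv i.
case: j => [[|[|[|[|[|j]]]]] hj] /=; rewrite /Tt /dT /=; apply: pdCM.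
- by apply: hmgB; [apply: (pdM hx hx) | apply: (pdM hy hy)]; rewrite add0m.
- by apply: (pdM hx hu); rewrite add0m.
- by apply: (pdM hy hv); rewrite add0m.
- by apply: (pdM hu hu).
- by apply: (pdM hv hv).
- by apply: (pdM hv hv).
Qed.
End PD.

Lemma pre_sum n : pre_measurement n =
  \sum_(s : {ffun 'I_n -> 'I_5}) \prod_(i < n) Tt n i (s i).
Proof.
rewrite pre_E (eq_bigr (fun i => \sum_(j < 5) Tt n i j)); last by move=> i _; apply: F_T.
by rewrite bigA_distr_bigA.
Qed.

Definition al (s : 'I_5) : nat := match val s with 2 => 1 | 4 => 2 | _ => 0 end%N.
Definition be (s : 'I_5) : nat := match val s with 1 => 1 | 3 => 2 | _ => 0 end%N.

Lemma dT_E n (i j : 'I_n) s : dT n i s j = ((i == j) * al s + (prevo i == j) * be s)%N.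
Proof.
case: s => [[|[|[|[|[|s]]]]] hs]; rewrite /dT /al /be /= ?mnm0E ?mnmDE ?mnm1E; lia.
Qed.

Lemma Dcoord n (s : {ffun 'I_n -> 'I_5}) (j : 'I_n) :
  (\sum_(i < n) dT n i (s i))%MM j = (al (s j) + be (s (nexto j)))%N.
Proof.
rewrite mnm_sumE.
rewrite (eq_bigr (fun i => ((i == j) * al (s i) + (prevo i == j) * be (s i))%N));
  last by move=> i _; apply: dT_E.
rewrite big_split /= (bigD1 j) //= eqxx big1 => [|i /negbTE -> //].
rewrite (bigD1 (nexto j)) //= prevo_eq eqxx big1 => [|i /negbTE hi]; last first.
  by rewrite prevo_eq hi.
lia.
Qed.

Section Comb.
Variables (n : nat) (s : {ffun 'I_n -> 'I_5}).
Hypothesis hD : (\sum_(i < n) dT n i (s i))%MM = ones n.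

Lemma Hj j : (al (s j) + be (s (nexto j)))%N = 1%N.
Proof. by rewrite -Dcoord hD mnmE. Qed.

Lemma fwd i : val (s i) = 1%N -> val (s (nexto i)) = 1%N.
Proof.
move=> h; have := Hj i; rewrite /al h /be.
case: (s (nexto i)) => [[|[|[|[|[|?]]]]] ?] //=.
Qed.

Definition Qs t := forall i : 'I_n, val i = t -> val (s i) = 1%N.

Lemma Qstep t : Qs t -> (t.+1 < n)%N -> Qs t.+1.
Proof.
move=> hQ ht i hi; have ht' : (t < n)%N by lia.
have -> : i = nexto (Ordinal ht').
  by apply: val_inj; rewrite /= /nextn hi; case: eqP => //; lia.
by apply: fwd; apply: hQ.
Qed.

Lemma Qup t0 : Qs t0 -> forall t, (t0 <= t)%N -> (t < n)%N -> Qs t.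
Proof.
move=> h0; elim => [|t IH] ht tn.
  have E : t0 = 0%N by lia.
  by rewrite -E.
case: (ltnP t0 t.+1) => h.
  by apply: Qstep => //; apply: IH; lia.
have E : t.+1 = t0 by lia.
by rewrite E.
Qed.

Lemma comb : (forall i, val (s i) = 1%N) \/ (forall i, val (s i) = 2%N).
Proof.
case: (pickP (fun i => val (s i) == 1%N)) => [i0 /eqP h0|hno].
  left; have Q0 : Qs i0 by move=> i /val_inj ->.
  have hn : (0 < n)%N by have := ltn_ord i0; lia.
  have Qn : Qs n.-1 by apply: (Qup _ Q0); have := ltn_ord i0; lia.
  have Qz : Qs 0.
    move=> i hi; have hn1 : (n.-1 < n)%N by lia.
    have -> : i = nexto (Ordinal hn1).
      by apply: val_inj; rewrite /= /nextn hi; case: eqP => //; lia.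
    by apply: fwd; apply: Qn.
  by move=> i; apply: (Qup _ Qz (val i) (leq0n _) (ltn_ord i) i erefl).
right => j; have := Hj j; have := hno (nexto j); rewrite /al /be /=.
case: (s j) => [[|[|[|[|[|?]]]]] ?]; case: (s (nexto j)) => [[|[|[|[|[|?]]]]] ?] //=.
Qed.
End Comb.

Definition o1 : 'I_5 := Ordinal (isT : (1 < 5)%N).
Definition o2 : 'I_5 := Ordinal (isT : (2 < 5)%N).

Lemma L_pre_two n k : analyzer_success n k -> (0 < n)%N ->
  measure_high n k (pre_measurement n) =
  measure_high n k (\prod_(i < n) Tt n i o1) + measure_high n k (\prod_(i < n) Tt n i o2).
Proof.
move=> hs hn.
rewrite pre_sum mh_sum (bigD1 [ffun => o1]) //= (bigD1 [ffun => o2]) /=; last first.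
  apply/eqP => /ffunP /(_ (Ordinal hn)); rewrite !ffunE => /(congr1 val) //.
rewrite [X in _ + (_ + X)]big1 ?addr0.
  have E1 : \prod_(i < n) Tt n i ([ffun => o1] i) = \prod_(i < n) Tt n i o1.
    by apply: eq_bigr => i _; rewrite ffunE.
  have E2 : \prod_(i < n) Tt n i ([ffun => o2] i) = \prod_(i < n) Tt n i o2.
    by apply: eq_bigr => i _; rewrite ffunE.
  by rewrite E1 E2.
move=> s /andP [ns1 ns2].
apply: (@mh_homog n k n (pairdeg n) (ones n) (\sum_(i < n) dT n i (s i))%MM).
- by move=> m; apply: cond_pairdeg.
- apply: (@hmg_prod _ _ (pairdeg n) (@pairdegD n) (@pairdeg0 n)) => i; exact: hmg_T.
- apply/eqP => E; have [h|h] := @comb n s E.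
  + by move/eqP: ns1; apply; apply/ffunP => i; rewrite ffunE; apply: val_inj; rewrite h.
  + by move/eqP: ns2; apply; apply/ffunP => i; rewrite ffunE; apply: val_inj; rewrite h.
Qed.

Lemma prodZ N (I : Type) (r : seq I) (c : I -> algC) (F : I -> state N) :
  \prod_(i <- r) (c i *: F i) = (\prod_(i <- r) c i) *: \prod_(i <- r) F i.
Proof.
elim: r => [|x r IH]; first by rewrite !big_nil scale1r.
by rewrite !big_cons IH -scalerAl -scalerAr scalerA.
Qed.

Definition selv n (i : 'I_n) (b : bool) : nat := if b then p1 i else p2 n i.
Arguments selv {n}.
Lemma selv_lt n (i : 'I_n) b : (selv i b < 2 * n)%N.
Proof.
rewrite /selv; case: b; last exact: p2_lt.
by have := ltn_ord i; rewrite /p1; lia.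
Qed.
Arguments selv_lt {n}.
Lemma selv_lt' n (i : 'I_n) b : (2 * n + selv i b < NN n)%N.
Proof. by have := selv_lt i b; rewrite /NN; lia. Qed.
Arguments selv_lt' {n}.
Definition selo n (i : 'I_n) b : 'I_(NN n) := Ordinal (selv_lt' i b).
Arguments selo {n}.

Lemma cv_sel n (i : 'I_n) b : cv n (selv i b) = 'X_(selo i b).
Proof. by rewrite /cv (@varE (NN n) _ (selv_lt' i b)). Qed.

Lemma cnt1 n (t : {ffun 'I_n -> bool}) (i0 : 'I_n) :
  (\sum_(i < n) (selv i (t i) == p1 i0 : nat))%N = t i0.
Proof.
rewrite (bigD1 i0) //= big1 ?addn0.
  have [f1 f2 f3 f4] := @p_facts n i0 i0 (ltn_ord i0) (ltn_ord i0).
  by rewrite /selv; case: (t i0); rewrite ?eqxx ?f3.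
move=> i /negbTE ne.
have [f1 f2 f3 f4] := @p_facts n i0 i (ltn_ord i0) (ltn_ord i).
rewrite /selv; case: (t i); rewrite ?f1 ?f3 //=; exact: (congr1 nat_of_bool ne).
Qed.

Lemma cnt2 n (t : {ffun 'I_n -> bool}) (i0 : 'I_n) :
  (\sum_(i < n) (selv i (t i) == p2 n i0 : nat))%N = ~~ t i0.
Proof.
rewrite (bigD1 i0) //= big1 ?addn0.
  have [f1 f2 f3 f4] := @p_facts n i0 i0 (ltn_ord i0) (ltn_ord i0).
  by rewrite /selv; case: (t i0); rewrite ?eqxx ?f2.
move=> i /negbTE ne.
have [f1 f2 f3 f4] := @p_facts n i0 i (ltn_ord i0) (ltn_ord i).
rewrite /selv; case: (t i); rewrite ?f2 ?f4 //=; exact: (congr1 nat_of_bool ne).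
Qed.

Lemma mget_sum N (I : Type) (r : seq I) (F : I -> 'X_{1..N}) j :
  mget (\sum_(i <- r) F i)%MM j = (\sum_(i <- r) mget (F i) j)%N.
Proof. exact: (big_morph (fun m => mget m j) (fun a b => @mgetD N a b j) (mget0 N j)). Qed.

Definition mt n (t : {ffun 'I_n -> bool}) : 'X_{1..NN n} :=
  (\sum_(i < n) U_(selo i (t i)))%MM.
Arguments mt {n}.

Lemma hp_mt n t (j : 'I_(2 * n)) :
  highpart n (mt t) j = (\sum_(i < n) (selv i (t i) == j : nat))%N.
Proof.
rewrite mnmE /mt mget_sum; apply: eq_bigr => i _.
by rewrite mgetU /= eqn_add2l.
Qed.

Lemma mt_low n t (o : 'I_(NN n)) : (o < 2 * n)%N -> mt t o = 0%N.
Proof.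
move=> h; rewrite /mt mnm_sumE big1 // => i _; rewrite mnm1E.
by apply/eqP; rewrite eqb0; apply/eqP => /(congr1 val) /=; lia.
Qed.

Lemma cover n (j : nat) : (j < 2 * n)%N ->
  exists i0 : 'I_n, j = p1 i0 \/ j = p2 n i0.
Proof.
move=> hj; have := divn_eq j 2; have := ltn_pmod j (isT : (0 < 2)%N).
case: (ltnP (j %% 2) 1) => h1 h2 E.
- have hh : (j %/ 2 < n)%N by lia.
  have hp := @p2_prevn n (j %/ 2) hh.
  exists (Ordinal (prevn_lt hh)); right; rewrite /= hp; lia.
- have hh : (j %/ 2 < n)%N by lia.
  exists (Ordinal hh); left; rewrite /p1 /=; lia.
Qed.

Definition tk n (k : nat -> nat) : {ffun 'I_n -> bool} := [ffun i : 'I_n => k (p1 i) == 1%N].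

Section KP.
Variables (n : nat) (k : nat -> nat).
Hypothesis hs : analyzer_success n k.

Lemma kp (i : 'I_n) : (k (p1 i) + k (p2 n i))%N = 1%N.
Proof. exact: hs. Qed.

Lemma hp_tk : highpart n (mt (tk n k)) = kmn n k.
Proof.
apply/mnmP => j; rewrite hp_mt mnmE.
have [i0 [E|E]] := @cover n j (ltn_ord j); rewrite E.
- by rewrite cnt1 ffunE; have := kp i0; case: eqP; lia.
- by rewrite cnt2 ffunE; have := kp i0; case: eqP; lia.
Qed.

Lemma hp_ne t : t != tk n k -> highpart n (mt t) != kmn n k.
Proof.
move=> ne; apply/negP => /eqP E; move/negP: ne; apply; apply/eqP/ffunP => i.
have hj : (p1 i < 2 * n)%N by have := ltn_ord i; rewrite /p1; lia.
have := congr1 (fun m : 'X_{1..2*n} => m (Ordinal hj)) E.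
rewrite /= hp_mt mnmE /= cnt1 ffunE; have := kp i.
case: (t i); case: eqP => //=; lia.
Qed.
End KP.

Lemma highpart_at n (m : 'X_{1..NN n}) (o : 'I_(NN n)) (j : 'I_(2*n)) :
  val o = (2*n + j)%N -> m o = highpart n m j.
Proof. by move=> E; rewrite mnmE -E mget_ord. Qed.

Lemma hmgXm N K (g : 'X_{1..N} -> 'X_{1..K}) m : hmg g (g m) 'X_[m].
Proof. by move=> m'; rewrite msuppX mem_seq1 => /eqP ->. Qed.

Lemma mh_low_X n k (W : state (NN n)) (m : 'X_{1..NN n}) :
  hmg (highpart n) 0%MM W -> highpart n m = kmn n k ->
  (forall o : 'I_(NN n), (o < 2 * n)%N -> m o = 0%N) ->
  measure_high n k (W * 'X_[m]) = W.
Proof.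
move=> hW hm hml.
suff -> : measure_high n k (W * 'X_[m]) = \sum_(w <- msupp W) W@_w *: 'X_[w].
  by rewrite -mpolyE.
rewrite {1}[W]mpolyE mulr_suml mh_sum; apply: eq_big_seq => w hw.
rewrite -scalerAl mhZ -mpolyXD mhX.
have hw0 : highpart n w = 0%MM := hW w hw.
have wz : forall o : 'I_(NN n), (2 * n <= o)%N -> w o = 0%N.
  move=> o h; have hj : (o - 2 * n < 2 * n)%N by have := ltn_ord o; rewrite /NN; lia.
  rewrite (@highpart_at n w o (Ordinal hj)) ?hw0 ?mnm0E //= ; lia.
have mk : forall o : 'I_(NN n), (2 * n <= o)%N -> m o = k (o - 2 * n)%N.
  move=> o h; have hj : (o - 2 * n < 2 * n)%N by have := ltn_ord o; rewrite /NN; lia.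
  rewrite (@highpart_at n m o (Ordinal hj)) ?hm ?mnmE //= ; lia.
have -> : condk n k (w + m)%MM = true.
  by apply/forallP => o; apply/implyP => h; rewrite mnmDE wz // mk.
congr (_ *: _); congr mpolyX; apply/mnmP => o; rewrite mnmE mnmDE.
case: ltnP => h; first by rewrite hml // addn0.
by rewrite wz.
Qed.

Lemma prodX n (t : {ffun 'I_n -> bool}) :
  \prod_(i < n) 'X_(selo i (t i)) = 'X_[mt t] :> state (NN n).
Proof.
by rewrite /mt (big_morph (fun m => 'X_[m] : state (NN n)) (@mpolyXD _ _) (@mpolyX0 _ _)).
Qed.

Lemma L_pairs n k (hs : analyzer_success n k) (W : state (NN n))
  (hW : hmg (highpart n) 0%MM W) (al be : 'I_n -> algC) :
  measure_high n k (W * \prod_(i < n) (al i *: cv n (p1 i) + be i *: cv n (p2 n i))) =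
  (\prod_(i < n) (if k (p1 i) == 1%N then al i else be i)) *: W.
Proof.
pose gam i (b : bool) := if b then al i else be i.
have E1 : forall i : 'I_n, al i *: cv n (p1 i) + be i *: cv n (p2 n i) =
    \sum_(b : bool) gam i b *: 'X_(selo i b).
  by move=> i; rewrite big_bool /= -!cv_sel.
rewrite (eq_bigr _ (fun i _ => E1 i)) bigA_distr_bigA mulr_sumr mh_sum.
rewrite (bigD1 (tk n k)) //= [X in _ + X]big1 ?addr0.
  rewrite prodZ -scalerAr mhZ prodX mh_low_X //.
  - by congr (_ *: _); apply: eq_bigr => i _; rewrite /gam ffunE.
  - exact: hp_tk.
  - exact: mt_low.
move=> t ne; rewrite prodZ -scalerAr mhZ prodX.
rewrite (@mh_homog n k (2 * n) (highpart n) (kmn n k) (0 + highpart n (mt t))%MM).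
- by rewrite scaler0.
- by move=> m; apply: cond_highpart.
- apply: hmgM => //; [exact: highpartD | exact: hmgXm].
- by rewrite add0m; apply: hp_ne.
Qed.

Lemma rot (R : comNzRingType) n (w : nat -> R) : (0 < n)%N ->
  \prod_(i < n) w (prevn n i) = \prod_(i < n) w i.
Proof.
case: n => // n' _; rewrite big_ord_recl big_ord_recr /= mulrC; congr (_ * _).
Qed.

Lemma hmg_lowprod n (f : nat -> nat) : (forall i, (i < n)%N -> (f i < 2 * n)%N) ->
  hmg (highpart n) 0%MM (\prod_(i < n) var (NN n) (f i)).
Proof.
move=> hf; have := @hmg_prod _ _ (highpart n) (@highpartD n) (@highpart0 n) _
   (index_enum 'I_n) (fun i : 'I_n => var (NN n) (f i)) (fun _ => 0%MM).
rewrite big1_eq; apply => i; apply: hmg_low; first exact: highpart_low.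
exact: hf.
Qed.

Lemma T1 n k : analyzer_success n k -> (0 < n)%N ->
  measure_high n k (\prod_(i < n) Tt n i o1) =
  ((2 * a2^+4)^+n * \prod_(i < n) (if k (p1 i) == 1%N then a2 else - a2)) *:
     \prod_(j < n) var (NN n) (2 * j).
Proof.
move=> hs hn.
have -> : \prod_(i < n) Tt n i o1 =
   ((2 * a2^+4)^+n)%:MP * (\prod_(j < n) var (NN n) (2 * j) * \prod_(i < n) uu n i).
  rewrite /Tt /= !big_split /= prodr_const card_ord rmorphXn /=; by [].
rewrite mhCM -scalerA; congr (_ *: _).
have -> : \prod_(i < n) uu n i =
    \prod_(i < n) (a2 *: cv n (p1 i) + (- a2) *: cv n (p2 n i)).
  rewrite -(@rot _ n (fun j => a2 *: cv n (p1 j) + (- a2) *: cv n (p2 n j)) hn).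
  by apply: eq_bigr => i _; rewrite /uu scalerBr scaleNr.
have := @L_pairs n k hs _ (@hmg_lowprod n (fun j => 2 * j)%N _) (fun _ => a2) (fun _ => - a2).
rewrite /= => ->; first by [].
move=> i hi; lia.
Qed.

Lemma T2 n k : analyzer_success n k -> (0 < n)%N ->
  measure_high n k (\prod_(i < n) Tt n i o2) =
  ((- (2 * a2^+4))^+n * a2 ^+ n) *: \prod_(j < n) var (NN n) (2 * j + 1).
Proof.
move=> hs hn.
have -> : \prod_(i < n) Tt n i o2 =
   ((- (2 * a2^+4))^+n)%:MP * (\prod_(j < n) var (NN n) (2 * j + 1) * \prod_(i < n) vv n i).
  rewrite /Tt /= !big_split /= prodr_const card_ord rmorphXn /=; by [].
rewrite mhCM -scalerA; congr (_ *: _).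
have -> : \prod_(i < n) vv n i =
    \prod_(i < n) (a2 *: cv n (p1 i) + a2 *: cv n (p2 n i)).
  by apply: eq_bigr => i _; rewrite /vv scalerDr.
have := @L_pairs n k hs _ (@hmg_lowprod n (fun j => 2 * j + 1)%N _) (fun _ => a2) (fun _ => a2).
rewrite /= => ->; last by move=> i hi; lia.
congr (_ *: _); rewrite (eq_bigr (fun _ => a2)); last by move=> i _; rewrite if_same.
by rewrite prodr_const card_ord.
Qed.

Lemma pf_var N j : (1 < N)%N ->
  phase_flip N 1 (var N j) = if j == 1%N then - var N 1 else var N j.
Proof.
move=> hN; case: (ltnP j N) => hj.
  rewrite [in LHS](@varE N j hj) /phase_flip comp_mpolyXU -tnth_nth tnth_mktuple /=.
  by case: ifP => // _; rewrite (@varE N j hj).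
rewrite var_out // /phase_flip rmorph0; case: eqP => // E; lia.
Qed.

Lemma pf_prod N r (I : Type) (s : seq I) (F : I -> state N) :
  phase_flip N r (\prod_(i <- s) F i) = \prod_(i <- s) phase_flip N r (F i).
Proof. exact: rmorph_prod. Qed.
Lemma pf_add N r (P Q : state N) : phase_flip N r (P + Q) = phase_flip N r P + phase_flip N r Q.
Proof. exact: rmorphD. Qed.
Lemma pf_scale N r c (P : state N) : phase_flip N r (c *: P) = c *: phase_flip N r P.
Proof. exact: linearZ. Qed.

Lemma pf_X n : (0 < n)%N ->
  phase_flip (NN n) 1 (\prod_(j < n) var (NN n) (2 * j)) = \prod_(j < n) var (NN n) (2 * j).
Proof.
move=> hn; rewrite pf_prod; apply: eq_bigr => i _; rewrite pf_var; last by rewrite /NN; lia.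
by case: eqP => //; lia.
Qed.

Lemma pf_Y n : (0 < n)%N ->
  phase_flip (NN n) 1 (\prod_(j < n) var (NN n) (2 * j + 1)) =
  - \prod_(j < n) var (NN n) (2 * j + 1).
Proof.
move=> hn; have hN : (1 < NN n)%N by rewrite /NN; lia.
case: n hn hN => // n' _ hN.
rewrite pf_prod !big_ord_recl pf_var // /= mulNr; congr (- (_ * _)).
apply: eq_bigr => i _; rewrite pf_var //; case: eqP => //; rewrite /bump; lia.
Qed.

Lemma sum_odd (f : nat -> nat) n :
  (\sum_(j < 2 * n) (if odd j then f j else 0))%N = (\sum_(i < n) f (2 * i + 1)%N)%N.
Proof.
elim: n => [|n IH]; first by rewrite !big_ord0.
have -> : (2 * n.+1 = (2*n).+1.+1)%N by lia.
rewrite !big_ord_recr /= IH mul2n odd_double /= addn0 addn1.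
by [].
Qed.

Lemma sodd_E n k : s_odd n k = (\sum_(i < n) k (p1 i))%N.
Proof. by rewrite /s_odd big_mkcond /= sum_odd. Qed.

Lemma HE n k : analyzer_success n k ->
  \prod_(i < n) (if k (p1 i) == 1%N then a2 else - a2) =
  a2 ^+ n * ((-1) ^+ n * (-1) ^+ (s_odd n k)).
Proof.
move=> hs.
rewrite (eq_bigr (fun i : 'I_n => a2 * ((-1) * (-1) ^+ (k (p1 i))))); last first.
  move=> i _; have := @kp n k hs i; case: (k (p1 i)) => [|[|?]] //= H.
  - by rewrite expr0 mulr1 mulrN1.
  - by rewrite expr1 mulrNN !mulr1.
rewrite big_split /= prodr_const card_ord big_split /= prodr_const card_ord.
congr (_ * (_ * _)); rewrite sodd_E.
by rewrite (big_morph (fun m => (-1 : algC) ^+ m) (exprD (-1)) (expr0 (-1))).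
Qed.

Theorem lemma3 (n : nat) (hn : (3 <= n)%N) (k : nat -> nat) :
  analyzer_success n k ->
  protocol_output n k != 0 ->
  exists c : algC, c != 0 /\ protocol_output n k = c *: B_plus n.
Proof.
move=> hs hne.
have hn0 : (0 < n)%N by lia.
suff [c hc] : exists c : algC, protocol_output n k = c *: B_plus n.
  exists c; split => //; apply/eqP => c0; move: hne; rewrite hc c0 scale0r eqxx.
  by [].
have LP := @L_pre_two n k hs hn0; rewrite (@T1 n k hs hn0) (@T2 n k hs hn0) (@HE n k hs) in LP.
have s2nz : s2 != 0 by rewrite /s2 sqrtC_eq0 pnatr_eq0.
rewrite /protocol_output /= LP /B_plus.
set X := \prod_(j < n) var (NN n) (2 * j).
set Y := \prod_(j < n) var (NN n) (2 * j + 1).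
set C := (2 * a2 ^+ 4) ^+ n.
have ED : (- (2 * a2 ^+ 4)) ^+ n * a2 ^+ n = C * a2 ^+ n * (-1) ^+ n.
  rewrite (exprNn (2 * a2 ^+ 4)) -/C; move: (a2 ^+ n) ((-1 : algC) ^+ n) C => x y z.
  ring.
rewrite ED -[(-1) ^+ s_odd n k]signr_odd.
case: ifP => hodd.
- rewrite pf_add !pf_scale pf_X // pf_Y //.
  exists (- (C * a2 ^+ n * (-1) ^+ n) * s2).
  rewrite [in RHS]scalerA mulfK // scalerDr scalerN -scaleNr hodd expr1.
  clear ED LP; congr (_ *: _ + _ *: _); move: (a2 ^+ n) ((-1 : algC) ^+ n) C => x y z; ring.
- exists (C * a2 ^+ n * (-1) ^+ n * s2).
  rewrite [in RHS]scalerA mulfK // scalerDr hodd expr0.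
  clear ED LP; congr (_ *: _ + _ *: _); move: (a2 ^+ n) ((-1 : algC) ^+ n) C => x y z; ring.
Qed.
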